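(* Let $H$ be a Hilbert space and $\mathrm{Pos}$ the space of positive invertible bounded self-adjoint operators on $H$ with the Thompson metric and base point the identity $I$. Then the function identically $0$ is not a metric functional of $\mathrm{Pos}$, and every metric functional of $\mathrm{Pos}$ is nonconstant, in fact unbounded.
   Context: $\mathrm{Pos}$ is the set of bounded self-adjoint positive definite invertible operators on $H$ with the Thompson metric $d(p,q)=\sup_{v\in H,\|v\|=1}\left|\log\frac{(qv,v)}{(pv,v)}\right|$. Let $\mathrm{Hom}(\mathrm{Pos},\mathbb{R})$ be the set of $1$-Lipschitz functions $\mathrm{Pos}\to\mathbb{R}$ with the topology of pointwise convergence and $h_q(\cdot)=d(\cdot,q)-d(I,q)$ for $q\in\mathrm{Pos}$. Metric functionals are the elements of the closure of $\{h_q:q\in\mathrm{Pos}\}$ in $\mathrm{Hom}(\mathrm{Pos},\mathbb{R})$. *)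

(* Defs.v *)
From HB Require Import structures.
From mathcomp Require Import all_boot all_order all_algebra.
From mathcomp Require Import all_classical all_reals.
From mathcomp Require Import exp.
From mathcomp Require Import complex.
Set Implicit Arguments. Unset Strict Implicit. Unset Printing Implicit Defensive.
Import Order.TTheory GRing.Theory Num.Theory.
Local Open Scope ring_scope.
Local Open Scope classical_set_scope.

Section Hilbert.
Variables (R : realType) (V : lmodType R[i]) (ip : V -> V -> R[i]).

Definition ipnorm (v : V) : R := Num.sqrt (complex.Re (ip v v)).

Definition is_hilbert : Prop :=
  [/\ (forall (a : R[i]) (x y z : V), ip (a *: x + y) z = a * ip x z + ip y z),
      (forall x y : V, ip y x = conjc (ip x y)),
      (forall x : V, x != 0 -> (0 < complex.Re (ip x x)) /\ complex.Im (ip x x) = 0),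
      ip 0 0 = 0 &
      (forall u : nat -> V,
         (forall e : R, 0 < e -> exists N : nat, forall m n : nat,
             (N <= m)%N -> (N <= n)%N -> ipnorm (u m - u n) < e) ->
         exists l : V, forall e : R, 0 < e -> exists N : nat, forall n : nat,
             (N <= n)%N -> ipnorm (u n - l) < e)].

Definition bounded_linear (A : V -> V) : Prop :=
  (forall (a : R[i]) (x y : V), A (a *: x + y) = a *: A x + A y) /\
  exists C : R, forall x : V, ipnorm (A x) <= C * ipnorm x.

Definition self_adjoint (A : V -> V) : Prop :=
  forall x y : V, ip (A x) y = ip x (A y).

Definition invertible_op (A : V -> V) : Prop :=
  exists B : V -> V, bounded_linear B /\ cancel A B /\ cancel B A.

Definition Pos (A : V -> V) : Prop :=
  [/\ bounded_linear A, self_adjoint A,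
      (forall v : V, v != 0 -> 0 < complex.Re (ip (A v) v)) & invertible_op A].

Definition thompson (p q : V -> V) : R :=
  sup [set r : R | exists v : V, ipnorm v = 1 /\
        r = `| ln (complex.Re (ip (q v) v) / complex.Re (ip (p v) v)) |].

Definition hfun (q : V -> V) : (V -> V) -> R :=
  fun p => thompson p q - thompson id q.

(* Hom(Pos, R): 1-Lipschitz functions on Pos (a function on Pos is
   represented by a function on all maps V -> V; only values on Pos matter). *)
Definition one_lipschitz (f : (V -> V) -> R) : Prop :=
  forall p q, Pos p -> Pos q -> `| f p - f q | <= thompson p q.

(* f lies in the closure of {h_q : q in Pos} for the topology of pointwise
   convergence on Pos: every basic neighbourhood (finitely many points of
   Pos, a tolerance e > 0) of f contains some h_q. *)
Definition in_ptws_closure_h (f : (V -> V) -> R) : Prop :=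
  forall (n : nat) (xs : 'I_n -> (V -> V)) (e : R),
    (forall i, Pos (xs i)) -> 0 < e ->
    exists q, Pos q /\ forall i, `| hfun q (xs i) - f (xs i) | < e.

(* metric functionals: elements of the closure of {h_q} in Hom(Pos,R) *)
Definition metric_functional (f : (V -> V) -> R) : Prop :=
  one_lipschitz f /\ in_ptws_closure_h f.

End Hilbert.

(* Main.v *)
Require Import Defs.
From HB Require Import structures.
From mathcomp Require Import all_boot all_order all_algebra.
From mathcomp Require Import all_classical all_reals.
From mathcomp Require Import exp.
From mathcomp Require Import complex.
From mathcomp Require Import lra.
From mathcomp Require Import sequences.
Import Order.TTheory GRing.Theory Num.Theory.
Local Open Scope ring_scope.
Local Open Scope complex_scope.
Local Open Scope classical_set_scope.

Lemma ReD (R : realType) (x y : R[i]) : complex.Re (x + y) = complex.Re x + complex.Re y.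
Proof. by case: x => a b; case: y => c d. Qed.
Lemma ReMr (R : realType) (c : R) (z : R[i]) : complex.Re (c%:C * z) = c * complex.Re z.
Proof. case: z => a b /=; by rewrite mul0r subr0. Qed.
Lemma Reconj (R : realType) (z : R[i]) : complex.Re (conjc z) = complex.Re z.
Proof. by case: z. Qed.

Section Aux.
Variables (R : realType) (V : lmodType R[i]) (ip : V -> V -> R[i]).
Hypothesis hH : is_hilbert ip.

Lemma ip0l z : ip 0 z = 0.
Proof.
case: hH => H1 _ _ _ _.
have := H1 (-1) 0 0 z. by rewrite scaler0 addr0 mulN1r addNr.
Qed.

Lemma ipZDl a x y z : ip (a *: x + y) z = a * ip x z + ip y z.
Proof. by case: hH. Qed.

Lemma ipZDr a x y z : ip z (a *: x + y) = conjc a * ip z x + ip z y.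
Proof.
case: hH => H1 H2 _ _ _.
by rewrite H2 H1 rmorphD rmorphM /= -!H2.
Qed.

Lemma Re_ip_sym x y : complex.Re (ip y x) = complex.Re (ip x y).
Proof. case: hH => _ H2 _ _ _. by rewrite H2 Reconj. Qed.

Lemma Re_ip_ge0 x : 0 <= complex.Re (ip x x).
Proof.
case: hH => _ _ H3 H4 _.
have [->|nx] := eqVneq x 0; first by rewrite H4.
by apply: ltW; case: (H3 x nx).
Qed.

Lemma ipnorm_sqr x : ipnorm ip x ^+ 2 = complex.Re (ip x x).
Proof. by rewrite /ipnorm sqr_sqrtr // Re_ip_ge0. Qed.

Lemma ipnorm_ge0 x : 0 <= ipnorm ip x.
Proof. by rewrite /ipnorm sqrtr_ge0. Qed.

Lemma ipnorm0 : ipnorm ip 0 = 0.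
Proof. case: hH => _ _ _ H4 _. by rewrite /ipnorm H4 /= sqrtr0. Qed.

Lemma unit_neq0 v : ipnorm ip v = 1 -> v != 0.
Proof. move=> h; apply/eqP => v0; move: h; rewrite v0 ipnorm0 => /eqP; by rewrite eq_sym oner_eq0. Qed.

Lemma Re_unit v : ipnorm ip v = 1 -> complex.Re (ip v v) = 1.
Proof. by move=> h; rewrite -ipnorm_sqr h expr1n. Qed.

Definition linop (A : V -> V) := forall (a : R[i]) (x y : V), A (a *: x + y) = a *: A x + A y.

Lemma linop0 A : linop A -> A 0 = 0.
Proof. move=> h; have := h (-1) 0 0. by rewrite scaler0 addr0 scaleN1r addNr. Qed.

Lemma CS A : linop A -> self_adjoint ip A -> (forall x, 0 <= complex.Re (ip (A x) x)) ->
  forall x y, 0 < complex.Re (ip (A y) y) ->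
  complex.Re (ip (A x) y) ^+ 2 <= complex.Re (ip (A x) x) * complex.Re (ip (A y) y).
Proof.
move=> hl hs hp x y hb.
set a := complex.Re (ip (A x) x); set b := complex.Re (ip (A y) y).
set r := complex.Re (ip (A x) y).
set t := r / b.
have htb : t * b = r by rewrite /t mulfVK // gt_eqF.
have key : 0 <= a - 2 * t * r + t ^+ 2 * b.
  have := hp ((- t)%:C *: y + x).
  rewrite hl ipZDl !ipZDr conjc_real !ReD !ReMr !ReD !ReMr.
  have -> : complex.Re (ip (A y) x) = r.
    by rewrite hs Re_ip_sym.
  rewrite -/a -/b -/r. move=> h. nra.
nra.
Qed.

Lemma lin_of_bl A : bounded_linear ip A -> linop A.
Proof. by case. Qed.

Lemma CSid x y : ipnorm ip y = 1 -> complex.Re (ip x y) ^+ 2 <= complex.Re (ip x x).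
Proof.
move=> hy.
have := @CS id (fun a x y => erefl) (fun x y => erefl) Re_ip_ge0 x y.
rewrite /= Re_unit // mulr1; apply; exact: ltr01.
Qed.


Lemma Pos_bounds q : Pos ip q -> exists d C : R, 0 < d /\
  forall v, ipnorm ip v = 1 -> d <= complex.Re (ip (q v) v) <= C.
Proof.
case=> [[hl [C0 hC0]] hs hp [B [[hlB [CB hCB]] [qB Bq]]]].
exists (1 / (`|CB| + 1)), C0; split.
  by apply: divr_gt0 => //; apply: ltr_pwDr.
move=> v hv.
have vn0 := unit_neq0 v hv.
have xpos := hp v vn0.
apply/andP; split; last first.
  have h1 := CSid (q v) v hv.
  rewrite -ipnorm_sqr in h1.
  have h2 := hC0 v; rewrite hv mulr1 in h2.
  have h3 := ipnorm_ge0 (q v).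
  nra.
set w := B v.
have qw : q w = v by rewrite /w Bq.
have wn0 : w != 0.
  apply/eqP => w0; move: vn0; by rewrite -qw w0 (linop0 _ hl) eqxx.
have bpos := hp w wn0.
have qpos : forall x, 0 <= complex.Re (ip (q x) x).
  move=> x; have [->|nx] := eqVneq x 0; first by rewrite (linop0 _ hl) ip0l.
  exact: ltW (hp x nx).
have cs := @CS q hl hs qpos v w bpos.
rewrite hs qw Re_unit // expr1n in cs.
have e1 : complex.Re (ip (q w) w) = complex.Re (ip w v) by rewrite qw Re_ip_sym.
have h1 := CSid w v hv.
rewrite -ipnorm_sqr -e1 in h1.
have h2 := hCB v; rewrite hv mulr1 -/w in h2.
have h3 := ipnorm_ge0 w.
have h4 : CB <= `|CB| by exact: ler_norm.
have h5 : complex.Re (ip (q w) w) <= ipnorm ip w by nra.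
have e2 : complex.Re (ip v w) = complex.Re (ip (q w) w) by rewrite qw.
rewrite e2 in cs.
rewrite ler_pdivrMr; last by apply: ltr_pwDr.
nra.
Qed.

Definition sc (c : R) : V -> V := fun v => c%:C *: v.

Lemma ipZl a x z : ip (a *: x) z = a * ip x z.
Proof. by have := ipZDl a x 0 z; rewrite addr0 ip0l addr0. Qed.

Lemma ip0r z : ip z 0 = 0.
Proof. case: hH => _ H2 _ _ _. by rewrite H2 ip0l conjc0. Qed.

Lemma ipZr a x z : ip z (a *: x) = conjc a * ip z x.
Proof. by have := ipZDr a x 0 z; rewrite addr0 ip0r addr0. Qed.

Lemma ipnormZ (c : R) x : 0 <= c -> ipnorm ip (c%:C *: x) = c * ipnorm ip x.
Proof.
move=> c0.
rewrite /ipnorm ipZl ipZr conjc_real mulrA -rmorphM /= ReMr sqrtrM ?mulr_ge0 //.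
by rewrite -expr2 sqrtr_sqr ger0_norm.
Qed.

Lemma scM c d x : sc c (sc d x) = sc (c * d) x.
Proof. by rewrite /sc scalerA -rmorphM. Qed.

Lemma sc1 x : sc 1 x = x.
Proof. by rewrite /sc rmorph1 scale1r. Qed.

Lemma bl_sc c : 0 <= c -> bounded_linear ip (sc c).
Proof.
move=> c0; split.
  by move=> a x y; rewrite /sc scalerDr !scalerA mulrC.
by exists c => x; rewrite ipnormZ.
Qed.

Lemma Re_sc c v : complex.Re (ip (sc c v) v) = c * complex.Re (ip v v).
Proof. by rewrite /sc ipZl ReMr. Qed.

Lemma Pos_sc c : 0 < c -> Pos ip (sc c).
Proof.
move=> c0; split.
- exact: bl_sc (ltW c0).
- by move=> x y; rewrite /sc ipZl ipZr conjc_real.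
- move=> v vn0; rewrite Re_sc; apply: mulr_gt0 => //.
  by case: hH => _ _ H3 _ _; case: (H3 v vn0).
- exists (sc c^-1); split; first by apply: bl_sc; rewrite invr_ge0 ltW.
  by split=> x; rewrite scM ?mulVf ?mulfV ?gt_eqF // sc1.
Qed.

Lemma unit_exists : (exists v : V, v != 0) -> exists u, ipnorm ip u = 1.
Proof.
case=> v vn0.
have np : 0 < ipnorm ip v.
  rewrite /ipnorm sqrtr_gt0. by case: hH => _ _ H3 _ _; case: (H3 v vn0).
exists ((ipnorm ip v)^-1%:C *: v).
by rewrite ipnormZ ?mulVf ?gt_eqF // invr_ge0 ltW.
Qed.

Lemma ln_div (x c : R) : 0 < x -> 0 < c -> ln (x / c) = ln x - ln c.
Proof. by move=> x0 c0; rewrite lnM ?posrE ?invr_gt0 // lnV ?posrE. Qed.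

Lemma tfacts q p (c : R) : (exists v : V, v != 0) -> Pos ip q -> 0 < c ->
  (forall v, ipnorm ip v = 1 -> complex.Re (ip (p v) v) = c) ->
  (forall v, ipnorm ip v = 1 ->
     `|ln (complex.Re (ip (q v) v)) - ln c| <= thompson ip p q) /\
  (forall eps, 0 < eps -> exists v, ipnorm ip v = 1 /\
     thompson ip p q - eps < `|ln (complex.Re (ip (q v) v)) - ln c|).
Proof.
move=> hnt hq c0 hpc.
have [d [C [d0 hdC]]] := Pos_bounds q hq.
have [u hu] := unit_exists hnt.
set E := [set r : R | exists v : V, ipnorm ip v = 1 /\
        r = `| ln (complex.Re (ip (q v) v) / complex.Re (ip (p v) v)) |].
have hE : forall v, ipnorm ip v = 1 ->
   E `|ln (complex.Re (ip (q v) v)) - ln c|.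
  move=> v hv; exists v; split => //.
  have /andP[h1 _] := hdC v hv.
  by rewrite hpc // ln_div // (lt_le_trans d0).
have hs : has_sup E.
  split; first by exists (`|ln (complex.Re (ip (q u) u)) - ln c|); exact: hE.
  exists (`|ln d| + `|ln C| + `|ln c|) => r [v [hv ->]].
  have /andP[h1 h2] := hdC v hv.
  have x0 : 0 < complex.Re (ip (q v) v) by exact: lt_le_trans h1.
  have C0 : 0 < C by exact: lt_le_trans h2.
  rewrite hpc // ln_div //.
  have l1 : ln d <= ln (complex.Re (ip (q v) v)) by rewrite ler_ln ?posrE.
  have l2 : ln (complex.Re (ip (q v) v)) <= ln C by rewrite ler_ln ?posrE.
  have n1 := ler_norm (ln C).
  have n2 := ler_norm (- ln d); rewrite normrN in n2.
  have n3 := ler_norm (ln c).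
  have n4 := ler_norm (- ln c); rewrite normrN in n4.
  have n5 := normr_ge0 (ln d); have n6 := normr_ge0 (ln C).
  set y := ln (complex.Re (ip (q v) v)) in l1 l2 *.
  have [hy|hy] := lerP 0 (y - ln c).
    rewrite ger0_norm //; lra.
  rewrite ltr0_norm //; lra.
split.
  move=> v hv; exact: (sup_upper_bound hs (hE v hv)).
move=> eps e0.
have [r [v [hv ->]] hr] := sup_adherent e0 hs.
exists v; split => //.
by rewrite hpc // ln_div // in hr; have /andP[h1 _] := hdC v hv; exact: lt_le_trans h1.
Qed.


Lemma key q (s eps : R) : (exists v : V, v != 0) -> Pos ip q -> 0 < eps ->
  s - eps < hfun ip q (sc (expR s)) \/ s - eps < hfun ip q (sc (expR (- s))).
Proof.
move=> hnt hq e0.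
have [_ t1] := @tfacts q id 1 hnt hq ltr01 (fun v hv => Re_unit v hv).
have [v [hv hT]] := t1 eps e0.
rewrite ln1 subr0 in hT.
have [t2 _] := @tfacts q (sc (expR s)) (expR s) hnt hq (expR_gt0 s)
  (fun v hv => ltac:(by rewrite Re_sc Re_unit // mulr1)).
have [t3 _] := @tfacts q (sc (expR (- s))) (expR (- s)) hnt hq (expR_gt0 (- s))
  (fun v hv => ltac:(by rewrite Re_sc Re_unit // mulr1)).
have a2 := t2 v hv; have a3 := t3 v hv.
rewrite expRK in a2; rewrite expRK in a3.
rewrite /hfun.
move: hT a2 a3; set y := ln (complex.Re (ip (q v) v)) => hT a2 a3.
have b2 := ler_norm (- (y - s)); rewrite normrN in b2.
have b3 := ler_norm (y - - s).
have [hy|hy] := lerP 0 y.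
  right; rewrite ger0_norm // in hT. lra.
left; rewrite ltr0_norm // in hT; lra.
Qed.

Lemma unbounded f : (exists v : V, v != 0) -> in_ptws_closure_h ip f ->
  forall M : R, exists p, Pos ip p /\ M < `| f p |.
Proof.
move=> hnt hf M.
set s := M + 1.
pose xs := fun i : 'I_2 => if val i == 0%N then sc (expR s) else sc (expR (- s)).
have hxs : forall i, Pos ip (xs i).
  by move=> i; rewrite /xs; case: ifP => _; apply: Pos_sc; apply: expR_gt0.
have e0 : 0 < 1 / 2 :> R by lra.
have [q [hq hqf]] := hf 2%N xs (1/2) hxs e0.
have h0 := hqf (@Ordinal 2 0 isT); have h1 := hqf (@Ordinal 2 1 isT).
rewrite /xs /= in h0 h1.
have [k|k] := @key q s (1/2) hnt hq e0.
  exists (sc (expR s)); split; first by apply: Pos_sc; apply: expR_gt0.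
  have n1 := ler_norm (f (sc (expR s))).
  move: h0; rewrite ltr_norml => /andP[u1 u2].
  rewrite /s in k u1 *; lra.
exists (sc (expR (- s))); split; first by apply: Pos_sc; apply: expR_gt0.
have n1 := ler_norm (f (sc (expR (- s)))).
move: h1; rewrite ltr_norml => /andP[u1 u2].
rewrite /s in k u1 *; lra.
Qed.

End Aux.

Theorem proposition22 (R : realType) (V : lmodType R[i]) (ip : V -> V -> R[i])
  (hH : is_hilbert ip) (hnt : exists v : V, v != 0) :
  ~ metric_functional ip (fun _ => 0 : R) /\
  (forall f : (V -> V) -> R, metric_functional ip f ->
     (exists p q, Pos ip p /\ Pos ip q /\ f p <> f q) /\
     (forall M : R, exists p, Pos ip p /\ M < `| f p |)).
Proof.
have U := @unbounded R V ip hH _ hnt.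
split.
  move=> [_ hc]; have [p [_]] := U _ hc 0.
  by rewrite normr0 ltxx.
move=> f [_ hc]; split; last exact: U.
have hp1 : Pos ip (@sc R V 1) by apply: (@Pos_sc R V ip hH); exact: ltr01.
have [p [hp hlt]] := U _ hc `|f (@sc R V 1)|.
exists p, (@sc R V 1); split => //; split => // e.
by move: hlt; rewrite e ltxx.
Qed.
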